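(* Let $s_0,t_0\ge 1$ be real numbers and let $\mathcal T$ be the infinite rooted tree of nodes generated from $(s_0,t_0)$ by the recursive rule described in the context. Then the set of accumulation points in $\mathbb R^2$ of the set of locations of the nodes of $\mathcal T$ is exactly the closed segment with extremities $(-1,s_0)$ and $(1,t_0)$, i.e. the set $\{(x,\,\tfrac{s_0+t_0}{2}+\tfrac{t_0-s_0}{2}x): x\in[-1,1]\}$.
   Context: Points of $\mathbb R^2$ are written $(x,y)$ (abscissa = space, ordinate = time). Given real numbers $s_0,t_0\ge 1$, a tree $\mathcal T$ is built recursively. Each node has a location $(x,y)\in\mathbb R^2$, a depth $d\in\mathbb N$ (the number of its ancestors that are split nodes), and a pair of real parameters $(s,t)$. The root is at $(0,0)$, has depth $0$ and parameters $(s_0,t_0)$. A node at $(x,y)$ of depth $d$ with parameters $(s,t)$ is: - a delay node if $s\ge 2$ and $t\ge 2$; it then has exactly one child, located at $(x,\,y+2^{-d})$, of depth $d$, with parameters $(s-1,\,t-1)$; - a split node otherwise (i.e. if $s<2$ or $t<2$); it then has exactly two children, both of depth $d+1$: a left child at $(x-2^{-(d+1)},\,y+2^{-(d+1)})$ with parameters $(2s-1,\,s+t-1)$, and a right child at $(x+2^{-(d+1)},\,y+2^{-(d+1)})$ with parameters $(s+t-1,\,2t-1)$. The recursion never stops, so $\mathcal T$ is infinite; each node is joined to its children by straight edges. *)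

(* Defs.v *)
From Stdlib Require Import Reals Lra.
Open Scope R_scope.

(* A node of the tree: location (nx, ny), depth nd, parameters (ns, nt). *)
Record node := mknode { nx : R; ny : R; nd : nat; ns : R; nt : R }.

Inductive in_tree (s0 t0 : R) : node -> Prop :=
| tree_root : in_tree s0 t0 (mknode 0 0 0 s0 t0)
| tree_delay : forall x y d s t,
    in_tree s0 t0 (mknode x y d s t) ->
    2 <= s -> 2 <= t ->
    in_tree s0 t0 (mknode x (y + / 2 ^ d) d (s - 1) (t - 1))
| tree_left : forall x y d s t,
    in_tree s0 t0 (mknode x y d s t) ->
    (s < 2 \/ t < 2) ->
    in_tree s0 t0 (mknode (x - / 2 ^ (S d)) (y + / 2 ^ (S d)) (S d)
                          (2 * s - 1) (s + t - 1))
| tree_right : forall x y d s t,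
    in_tree s0 t0 (mknode x y d s t) ->
    (s < 2 \/ t < 2) ->
    in_tree s0 t0 (mknode (x + / 2 ^ (S d)) (y + / 2 ^ (S d)) (S d)
                          (s + t - 1) (2 * t - 1)).

Definition locations (s0 t0 : R) (p : R * R) : Prop :=
  exists n, in_tree s0 t0 n /\ p = (nx n, ny n).

Definition dist2 (p q : R * R) : R :=
  sqrt ((fst p - fst q) ^ 2 + (snd p - snd q) ^ 2).

Definition accumulation_point (A : R * R -> Prop) (p : R * R) : Prop :=
  forall eps, 0 < eps -> exists q, A q /\ q <> p /\ dist2 p q < eps.

Definition segment (s0 t0 : R) (p : R * R) : Prop :=
  exists x, -1 <= x <= 1 /\ p = (x, (s0 + t0) / 2 + (t0 - s0) / 2 * x).

(* Main.v *)
Require Import Defs.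
From Stdlib Require Import Reals Lra Lia ZArith.
Open Scope R_scope.

Definition ell (s0 t0 x : R) := (s0 + t0) / 2 + (t0 - s0) / 2 * x.

Definition Inv (s0 t0 : R) (n : node) : Prop :=
  ns n - nt n = s0 - t0 /\ 1 <= ns n /\ 1 <= nt n /\
  ns n <= 2 * (s0 + t0) + 3 /\ nt n <= 2 * (s0 + t0) + 3 /\
  -1 + / 2 ^ nd n <= nx n <= 1 - / 2 ^ nd n /\
  ny n + (ns n + nt n) / 2 * / 2 ^ nd n = ell s0 t0 (nx n) /\
  (exists k, nx n * 2 ^ nd n = IZR k) /\ (exists m, ny n * 2 ^ nd n = IZR m).

Lemma pow2_pos d : 0 < 2 ^ d.
Proof. apply pow_lt; lra. Qed.

Lemma inv_tree s0 t0 n : 1 <= s0 -> 1 <= t0 -> in_tree s0 t0 n -> Inv s0 t0 n.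
Proof.
  intros hs ht H; induction H as [| x y d s t H IH h1 h2 | x y d s t H IH h | x y d s t H IH h];
  unfold Inv in *; simpl in *.
  - unfold ell. rewrite Rinv_1. repeat split; try lra.
    exists 0%Z; lra. exists 0%Z; lra.
  - destruct IH as (e1 & e2 & e3 & e4 & e5 & e6 & e7 & [k hk] & [m hm]).
    assert (hw : / 2 ^ d * 2 ^ d = 1) by (apply Rinv_l; generalize (pow2_pos d); lra).
    repeat split; try lra.
    + exists k; lra.
    + exists (m + 1)%Z. rewrite plus_IZR. nra.
  - destruct IH as (e1 & e2 & e3 & e4 & e5 & e6 & e7 & [k hk] & [m hm]).
    assert (hw : / 2 ^ d * 2 ^ d = 1) by (apply Rinv_l; generalize (pow2_pos d); lra).
    assert (hp := pow2_pos d). assert (hwp : 0 < / 2 ^ d) by (apply Rinv_0_lt_compat; lra).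
    replace (/ (2 * 2 ^ d)) with (/ 2 ^ d / 2) by (field; lra).
    set (w := / 2 ^ d) in *. set (P := 2 ^ d) in *.
    repeat split; try lra.
    + unfold ell in *. nra.
    + exists (2 * k - 1)%Z. rewrite minus_IZR, mult_IZR. nra.
    + exists (2 * m + 1)%Z. rewrite plus_IZR, mult_IZR. nra.
  - destruct IH as (e1 & e2 & e3 & e4 & e5 & e6 & e7 & [k hk] & [m hm]).
    assert (hw : / 2 ^ d * 2 ^ d = 1) by (apply Rinv_l; generalize (pow2_pos d); lra).
    assert (hp := pow2_pos d). assert (hwp : 0 < / 2 ^ d) by (apply Rinv_0_lt_compat; lra).
    replace (/ (2 * 2 ^ d)) with (/ 2 ^ d / 2) by (field; lra).
    set (w := / 2 ^ d) in *. set (P := 2 ^ d) in *.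
    repeat split; try lra.
    + unfold ell in *. nra.
    + exists (2 * k + 1)%Z. rewrite plus_IZR, mult_IZR. nra.
    + exists (2 * m + 1)%Z. rewrite plus_IZR, mult_IZR. nra.
Qed.

Lemma Rabs_le_inv x a : Rabs x <= a -> -a <= x <= a.
Proof. unfold Rabs; destruct (Rcase_abs x); lra. Qed.
Lemma Rabs_lt_inv x a : Rabs x < a -> -a < x < a.
Proof. unfold Rabs; destruct (Rcase_abs x); lra. Qed.

Lemma split_exists s0 t0 (hs : 1 <= s0) (ht : 1 <= t0) k : forall n, in_tree s0 t0 n ->
  ns n <= INR k -> exists n', in_tree s0 t0 n' /\ nx n' = nx n /\ nd n' = nd n /\
   (ns n' < 2 \/ nt n' < 2).
Proof.
  induction k as [|k IH]; intros [x y d s t] Hn Hk; cbn [ns nt nx ny nd] in *.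
  - destruct (inv_tree _ _ _ hs ht Hn) as (_ & h & _). simpl in *. lra.
  - destruct (Rlt_or_le s 2) as [h|h].
    + exists (mknode x y d s t); simpl; auto.
    + destruct (Rlt_or_le t 2) as [h'|h'].
      * exists (mknode x y d s t); simpl; auto.
      * destruct (IH (mknode x (y + / 2 ^ d) d (s - 1) (t - 1))) as (n' & A1 & A2 & A3 & A4).
        -- now constructor.
        -- simpl. rewrite S_INR in Hk. lra.
        -- exists n'; simpl in *; auto.
Qed.

Lemma descend s0 t0 (hs : 1 <= s0) (ht : 1 <= t0) a (ha : -1 <= a <= 1) D :
  exists n, in_tree s0 t0 n /\ nd n = D /\ Rabs (nx n - a) <= / 2 ^ D.
Proof.
  destruct (INR_unbounded (2 * (s0 + t0) + 3)) as [K HK].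
  induction D as [|D IH].
  - exists (mknode 0 0 0 s0 t0). simpl. split; [constructor|split; auto].
    rewrite Rinv_1. apply Rabs_le. lra.
  - destruct IH as (n & Hn & Hd & Ha).
    destruct (inv_tree _ _ _ hs ht Hn) as (_ & _ & _ & hb & _).
    destruct (split_exists s0 t0 hs ht K n Hn ltac:(lra)) as ([x y d s t] & H1 & H2 & H3 & H4).
    simpl in *. rewrite H3, Hd in H1.
    assert (hp := pow2_pos D).
    rewrite <- H2 in Ha. set (w := / 2 ^ D) in *.
    destruct (Rle_or_lt a x) as [h|h].
    + exists (mknode (x - / 2 ^ (S D)) (y + / 2 ^ (S D)) (S D) (2 * s - 1) (s + t - 1)).
      split; [now constructor|]. simpl. split; auto.
      replace (/ (2 * 2 ^ D)) with (w / 2) by (unfold w; field; lra).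
      apply Rabs_le. apply Rabs_le_inv in Ha. lra.
    + exists (mknode (x + / 2 ^ (S D)) (y + / 2 ^ (S D)) (S D) (s + t - 1) (2 * t - 1)).
      split; [now constructor|]. simpl. split; auto.
      replace (/ (2 * 2 ^ D)) with (w / 2) by (unfold w; field; lra).
      apply Rabs_le. apply Rabs_le_inv in Ha. lra.
Qed.

Lemma dist_lt p q e : dist2 p q < e ->
  Rabs (fst p - fst q) < e /\ Rabs (snd p - snd q) < e.
Proof.
  unfold dist2. intros H. set (a := fst p - fst q) in *. set (b := snd p - snd q) in *.
  split.
  - rewrite <- sqrt_Rsqr_abs. eapply Rle_lt_trans; [|exact H].
    apply sqrt_le_1_alt. unfold Rsqr. nra.
  - rewrite <- sqrt_Rsqr_abs. eapply Rle_lt_trans; [|exact H].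
    apply sqrt_le_1_alt. unfold Rsqr. nra.
Qed.

Lemma dist_le p q : dist2 p q <= Rabs (fst p - fst q) + Rabs (snd p - snd q).
Proof.
  unfold dist2. set (a := fst p - fst q). set (b := snd p - snd q).
  assert (h1 := Rabs_pos a). assert (h2 := Rabs_pos b).
  assert (e1 : Rabs a * Rabs a = a * a) by (rewrite <- Rabs_mult; apply Rabs_right; nra).
  assert (e2 : Rabs b * Rabs b = b * b) by (rewrite <- Rabs_mult; apply Rabs_right; nra).
  rewrite <- (sqrt_square (Rabs a + Rabs b)) by lra.
  apply sqrt_le_1_alt. assert (0 <= Rabs a * Rabs b) by (apply Rmult_le_pos; auto).
  simpl. nra.
Qed.

Lemma dist_pos p q : p <> q -> 0 < dist2 p q.
Proof.
  intros H. unfold dist2. destruct (Rle_lt_or_eq_dec 0 (sqrt ((fst p - fst q) ^ 2 + (snd p - snd q) ^ 2)) (sqrt_pos _)) as [h|h]; auto.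
  symmetry in h. apply sqrt_eq_0 in h; [|apply Rplus_le_le_0_compat; apply pow2_ge_0].
  exfalso; apply H. destruct p as [p1 p2], q as [q1 q2]; simpl in *.
  generalize (pow2_ge_0 (p1-q1)) (pow2_ge_0 (p2-q2)); intros g1 g2.
  assert (h1 : (p1-q1)^2 = 0) by lra. assert (h2 : (p2-q2)^2 = 0) by lra.
  assert (k1 : (p1-q1)*(p1-q1) = 0) by (simpl in h1; lra).
  assert (k2 : (p2-q2)*(p2-q2) = 0) by (simpl in h2; lra).
  apply Rmult_integral in k1, k2. f_equal; destruct k1, k2; lra.
Qed.

Lemma grid_eq u v P k1 k2 : 0 < P -> u * P = IZR k1 -> v * P = IZR k2 ->
  Rabs (u - v) < / P -> u = v.
Proof.
  intros hP h1 h2 h. apply Rabs_lt_inv in h.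
  assert (hi : / P * P = 1) by (apply Rinv_l; lra).
  assert (-1 < IZR (k1 - k2) < 1).
  { rewrite minus_IZR, <- h1, <- h2. split; nra. }
  destruct H as [H1 H2]. apply lt_IZR in H1, H2.
  assert (k1 = k2) by lia. subst. apply Rmult_eq_reg_r with P; lra.
Qed.

Lemma lattice s0 t0 n D : Inv s0 t0 n -> (nd n <= D)%nat ->
  (exists k, nx n * 2 ^ D = IZR k) /\ (exists m, ny n * 2 ^ D = IZR m).
Proof.
  intros (_ & _ & _ & _ & _ & _ & _ & [k hk] & [m hm]) hD.
  replace D with (nd n + (D - nd n))%nat by lia. rewrite pow_add.
  assert (e : 2 ^ (D - nd n) = IZR (2 ^ Z.of_nat (D - nd n))) by (rewrite <- pow_IZR; reflexivity).
  rewrite e. split.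
  - exists (k * 2 ^ Z.of_nat (D - nd n))%Z. rewrite mult_IZR, <- hk. ring.
  - exists (m * 2 ^ Z.of_nat (D - nd n))%Z. rewrite mult_IZR, <- hm. ring.
Qed.

Lemma pow2_unbounded r : exists D, r < 2 ^ D.
Proof.
  destruct (INR_unbounded r) as [K HK]. exists K.
  assert (forall n, INR n <= 2 ^ n).
  { induction n as [|n IH]; [simpl; lra|]. rewrite S_INR. simpl.
    assert (1 <= 2 ^ n) by (apply pow_R1_Rle; lra). lra. }
  specialize (H K). lra.
Qed.

Lemma ell_lip s0 t0 u v : 1 <= s0 -> 1 <= t0 ->
  Rabs (ell s0 t0 u - ell s0 t0 v) <= (s0 + t0) * Rabs (u - v).
Proof.
  intros. unfold ell. replace ((s0 + t0) / 2 + (t0 - s0) / 2 * u - ((s0 + t0) / 2 + (t0 - s0) / 2 * v))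
    with ((t0 - s0) / 2 * (u - v)) by ring.
  rewrite Rabs_mult. apply Rmult_le_compat_r; [apply Rabs_pos|]. apply Rabs_le. lra.
Qed.

Lemma winv d : / 2 ^ d * 2 ^ d = 1 /\ 0 < / 2 ^ d.
Proof. assert (h := pow2_pos d). split; [apply Rinv_l; lra | apply Rinv_0_lt_compat; lra]. Qed.

Lemma wmono d D : (D <= d)%nat -> / 2 ^ d <= / 2 ^ D.
Proof.
  intros h. apply Rinv_le_contravar; [apply pow2_pos|]. apply Rle_pow; [lra|lia].
Qed.

Lemma node_facts s0 t0 n : 1 <= s0 -> 1 <= t0 -> in_tree s0 t0 n ->
  -1 <= nx n <= 1 /\ 0 < ell s0 t0 (nx n) - ny n /\
  ell s0 t0 (nx n) - ny n <= (2 * (s0 + t0) + 3) * / 2 ^ nd n.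
Proof.
  intros hs ht H. destruct (inv_tree _ _ _ hs ht H) as (e1 & e2 & e3 & e4 & e5 & e6 & e7 & _).
  destruct (winv (nd n)) as [w1 w2]. set (w := / 2 ^ nd n) in *.
  split; [lra|]. split.
  - assert (0 < (ns n + nt n) / 2 * w) by (apply Rmult_lt_0_compat; lra). lra.
  - assert ((ns n + nt n) / 2 * w <= (2 * (s0 + t0) + 3) * w) by (apply Rmult_le_compat_r; lra). lra.
Qed.

Theorem theorem1 (s0 t0 : R) (hs0 : 1 <= s0) (ht0 : 1 <= t0) :
  forall p : R * R,
    accumulation_point (locations s0 t0) p <-> segment s0 t0 p.
Proof.
  intros [a b]. set (B := 2 * (s0 + t0) + 3). set (K := s0 + t0).
  assert (hK : 0 <= K) by (unfold K; lra).
  assert (hB : 0 < B) by (unfold B; lra).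
  assert (lip : forall u v, Rabs (ell s0 t0 u - ell s0 t0 v) <= K * Rabs (u - v))
    by (intros; apply ell_lip; auto).
  split.
  - intros Hacc.
    assert (near : forall eps, 0 < eps -> exists n, in_tree s0 t0 n /\
      (nx n, ny n) <> (a, b) /\ Rabs (a - nx n) < eps /\ Rabs (b - ny n) < eps).
    { intros eps he. destruct (Hacc eps he) as (q & [n [Hn ->]] & hne & hd).
      apply dist_lt in hd. simpl in hd. exists n. repeat split; try tauto. }
    assert (hx : -1 <= a <= 1).
    { destruct (Rle_or_lt a 1) as [h1|h1].
      - destruct (Rle_or_lt (-1) a) as [h2|h2]; [lra|].
        destruct (near (-1 - a) ltac:(lra)) as (n & Hn & _ & h & _).
        destruct (node_facts _ _ _ hs0 ht0 Hn) as (f1 & _). apply Rabs_lt_inv in h. lra.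
      - destruct (near (a - 1) ltac:(lra)) as (n & Hn & _ & h & _).
        destruct (node_facts _ _ _ hs0 ht0 Hn) as (f1 & _). apply Rabs_lt_inv in h. lra. }
    assert (hup : b <= ell s0 t0 a).
    { destruct (Rle_or_lt b (ell s0 t0 a)) as [h|h]; auto. exfalso.
      set (g := b - ell s0 t0 a).
      set (eps := g / (K + 1)).
      assert (heps : 0 < eps) by (unfold eps, g; apply Rdiv_lt_0_compat; lra).
      assert (eg : (K + 1) * eps = g) by (unfold eps; field; lra).
      destruct (near eps heps) as (n & Hn & _ & h1 & h2).
      destruct (node_facts _ _ _ hs0 ht0 Hn) as (f1 & f2 & f3).
      specialize (lip (nx n) a). rewrite Rabs_minus_sym in h1.
      assert (K * Rabs (nx n - a) <= K * eps) by (apply Rmult_le_compat_l; lra).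
      apply Rabs_le_inv in lip. apply Rabs_lt_inv in h2. unfold g in eg. lra. }
    assert (hlo : ell s0 t0 a <= b).
    { destruct (Rle_or_lt (ell s0 t0 a) b) as [h|h]; auto. exfalso.
      set (g := ell s0 t0 a - b).
      assert (gdef : g = ell s0 t0 a - b) by reflexivity.
      assert (hg : 0 < g) by (unfold g; lra).
      destruct (pow2_unbounded (2 * B / g)) as [D HD].
      destruct (winv D) as [wD1 wD2]. set (wD := / 2 ^ D) in *. set (PD := 2 ^ D) in *.
      assert (hBD : B * wD < g / 2).
      { assert (2 * B < g * PD).
        { apply (Rmult_lt_compat_r g) in HD; auto.
          replace (2 * B / g * g) with (2 * B) in HD by (field; lra). lra. }
        nra. }
      set (eps := Rmin (g / (2 * (K + 1))) (wD / 2)).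
      assert (heps : 0 < eps).
      { unfold eps. apply Rmin_glb_lt; [apply Rdiv_lt_0_compat|]; lra. }
      assert (he1 : (K + 1) * eps <= g / 2).
      { assert (eps <= g / (2 * (K + 1))) by apply Rmin_l.
        apply (Rmult_le_compat_l (K + 1)) in H; [|lra].
        replace ((K + 1) * (g / (2 * (K + 1)))) with (g / 2) in H by (field; lra). lra. }
      assert (he2 : eps <= wD / 2) by apply Rmin_r.
      assert (depth : forall n, in_tree s0 t0 n -> Rabs (a - nx n) < eps ->
                Rabs (b - ny n) < eps -> (nd n < D)%nat).
      { intros n Hn h1 h2.
        destruct (node_facts _ _ _ hs0 ht0 Hn) as (f1 & f2 & f3). fold B in f3.
        specialize (lip (nx n) a). rewrite Rabs_minus_sym in h1.
        assert (K * Rabs (nx n - a) <= K * eps) by (apply Rmult_le_compat_l; lra).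
        apply Rabs_le_inv in lip. apply Rabs_lt_inv in h2.
        destruct (Nat.lt_ge_cases (nd n) D) as [hd|hd]; auto. exfalso.
        apply wmono in hd. fold wD in hd.
        assert (B * / 2 ^ nd n <= B * wD) by (apply Rmult_le_compat_l; [lra | exact hd]). lra. }
      destruct (near eps heps) as (n1 & Hn1 & hne1 & h11 & h12).
      set (q1 := (nx n1, ny n1)) in *.
      assert (hd1 := dist_pos _ _ (not_eq_sym hne1)).
      set (eps2 := Rmin eps (dist2 (a, b) q1)).
      assert (heps2 : 0 < eps2) by (apply Rmin_glb_lt; lra).
      destruct (Hacc eps2 heps2) as (q2 & [n2 [Hn2 Eq2]] & hne2 & hd2).
      assert (hlt : dist2 (a, b) q2 < dist2 (a, b) q1).
      { eapply Rlt_le_trans; [exact hd2| apply Rmin_r]. }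
      assert (hd2' : dist2 (a, b) q2 < eps) by (eapply Rlt_le_trans; [exact hd2| apply Rmin_l]).
      subst q2. apply dist_lt in hd2'. simpl in hd2'. destruct hd2' as [h21 h22].
      assert (D1 := depth n1 Hn1 h11 h12). assert (D2 := depth n2 Hn2 h21 h22).
      destruct (lattice _ _ _ D (inv_tree _ _ _ hs0 ht0 Hn1) ltac:(lia)) as [[k1 hk1] [m1 hm1]].
      destruct (lattice _ _ _ D (inv_tree _ _ _ hs0 ht0 Hn2) ltac:(lia)) as [[k2 hk2] [m2 hm2]].
      apply Rabs_lt_inv in h11, h12, h21, h22.
      assert (ex : nx n1 = nx n2).
      { apply (grid_eq _ _ PD k1 k2); auto; [apply pow2_pos|]. apply Rabs_def1; fold wD; lra. }
      assert (ey : ny n1 = ny n2).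
      { apply (grid_eq _ _ PD m1 m2); auto; [apply pow2_pos|]. apply Rabs_def1; fold wD; lra. }
      unfold q1 in hlt. rewrite ex, ey in hlt. lra. }
    exists a. split; auto. unfold ell in *. f_equal. lra.
  - intros (x & hx & E). injection E as -> ->. intros eps heps.
    destruct (pow2_unbounded ((1 + K + B) / eps)) as [D HD].
    destruct (winv D) as [wD1 wD2]. set (wD := / 2 ^ D) in *. set (PD := 2 ^ D) in *.
    assert (hsmall : (1 + K + B) * wD < eps).
    { apply (Rmult_lt_compat_r eps) in HD; auto.
      replace ((1 + K + B) / eps * eps) with (1 + K + B) in HD by (field; lra). nra. }
    destruct (descend s0 t0 hs0 ht0 x hx D) as (n & Hn & Hd & Ha).
    destruct (node_facts _ _ _ hs0 ht0 Hn) as (f1 & f2 & f3). rewrite Hd in f3. change (/ 2 ^ D) with wD in f3, Ha. fold B in f3.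
    exists (nx n, ny n). split; [exists n; split; auto|]. split.
    + intros E. injection E as E1 E2. rewrite E1 in f2. unfold ell in *. lra.
    + eapply Rle_lt_trans; [apply dist_le|]. simpl.
      replace ((s0 + t0) / 2 + (t0 - s0) / 2 * x - ny n) with
        ((ell s0 t0 x - ell s0 t0 (nx n)) + (ell s0 t0 (nx n) - ny n)) by (unfold ell; ring).
      eapply Rle_lt_trans; [apply Rplus_le_compat_l; apply Rabs_triang|].
      specialize (lip x (nx n)). rewrite Rabs_minus_sym in Ha.
      assert (K * Rabs (x - nx n) <= K * wD) by (apply Rmult_le_compat_l; lra).
      rewrite (Rabs_right (ell s0 t0 (nx n) - ny n)) by lra.
      lra.
Qed.
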